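(* Let $\mathscr{C}$ be a $(t,1)_q$ generalized convertible code over $\mathbb{F}_q$ with initial codes $\mathcal{C}^{I_1},\dots,\mathcal{C}^{I_t}$ ($\mathcal{C}^{I_i}$ an $[n_{I_i},k_{I_i}]_q$ code) and final code $\mathcal{C}^F$ (an $[n_F,k_F]_q$ code). Assume $\mathcal{C}^F$ has $(r,\delta)$-locality and let $d_F$ be its minimum distance. For $i\in[t]$ let $\Delta_i=|\mathcal{U}_i\setminus\mathcal{R}_i|-d_F+1$. Then for each $i\in[t]$, $$|\mathcal{R}_i|\ge\begin{cases}k_{I_i}, & \text{if } \Delta_i\le 0,\\ k_{I_i}-\Delta_i+(\delta-1)\left\lfloor\frac{\Delta_i}{r+\delta-1}\right\rfloor, & \text{otherwise}.\end{cases}$$ Moreover, if $d_F>n_{I_i}-k_{I_i}+1$ for some $i\in[t]$, then $\Delta_i\le 0$ and hence $|\mathcal{R}_i|\ge k_{I_i}$.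
   Context: All codes are linear over $\mathbb{F}_q$; $[n]=\{1,\dots,n\}$. A $(t,1)_q$ generalized convertible code consists of $t$ initial linear codes $\mathcal{C}^{I_1},\dots,\mathcal{C}^{I_t}$, $\mathcal{C}^{I_i}$ an $[n_{I_i},k_{I_i}]_q$ code, a final linear $[n_F,k_F]_q$ code $\mathcal{C}^F$ with $k_F=\sum_i k_{I_i}$, and a linear bijection $\phi:\mathcal{C}^{I_1}\times\cdots\times\mathcal{C}^{I_t}\to\mathcal{C}^F$, together with: for each $i$, a set $\mathcal{U}_i$ of coordinates of $\mathcal{C}^{I_i}$ (unchanged symbols) with an injective assignment of each $u\in\mathcal{U}_i$ to a coordinate of $\mathcal{C}^F$, images of different pairs $(i,u)$ distinct, such that for all $(c_1,\dots,c_t)$ the coordinate of $\phi(c_1,\dots,c_t)$ assigned to $u$ equals the $u$-th coordinate of $c_i$; the set $\mathcal{W}$ of coordinates of $\mathcal{C}^F$ not assigned to any unchanged symbol (written symbols); and for each $i$ a set $\mathcal{R}_i$ of coordinates of $\mathcal{C}^{I_i}$ (read symbols) such that $\phi(c_1,\dots,c_t)|_{\mathcal{W}}$ is a function of $(c_1|_{\mathcal{R}_1},\dots,c_t|_{\mathcal{R}_t})$. A code $\mathcal{C}\subseteq\mathbb{F}_q^n$ has $(r,\delta)$-locality ($r\ge1,\delta\ge2$) if every coordinate $i$ lies in a subset $J_i\subseteq[n]$ with $|J_i|\le r+\delta-1$ such that $\mathcal{C}|_{J_i}$ has minimum distance at least $\delta$. *)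

(* Defs.v *)
From HB Require Import structures.
From mathcomp Require Import all_boot all_order all_algebra.
Set Implicit Arguments. Unset Strict Implicit. Unset Printing Implicit Defensive.
Import Order.TTheory GRing.Theory Num.Theory.
Local Open Scope ring_scope.

(* Linear codes of length n over F are subspaces of row vectors 'rV[F]_n;
   the j-th coordinate of a codeword c is c ord0 j. *)

Definition supp_in (F : fieldType) (n : nat) (J : {set 'I_n}) (c : 'rV[F]_n)
  : {set 'I_n} := [set j in J | c ord0 j != 0].

Definition wt (F : fieldType) (n : nat) (c : 'rV[F]_n) : nat :=
  #|supp_in [set: 'I_n] c|.

Definition is_min_dist (F : fieldType) (n : nat) (C : {vspace 'rV[F]_n})
  (d : nat) : Prop :=
  (exists2 c, c \in C & c != 0 /\ wt c = d) /\
  (forall c, c \in C -> c != 0 -> (d <= wt c)%N).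

(* the restricted (punctured) code C|_J has minimum distance at least delta:
   every codeword whose restriction to J is nonzero has at least delta
   nonzero coordinates in J *)
Definition restr_dist_ge (F : fieldType) (n : nat) (C : {vspace 'rV[F]_n})
  (J : {set 'I_n}) (delta : nat) : Prop :=
  forall c, c \in C -> supp_in J c != set0 -> (delta <= #|supp_in J c|)%N.

Definition has_locality (F : fieldType) (n : nat) (C : {vspace 'rV[F]_n})
  (r delta : nat) : Prop :=
  (1 <= r)%N /\ (2 <= delta)%N /\
  forall i : 'I_n, exists J : {set 'I_n},
    [/\ i \in J, (#|J| <= r + delta - 1)%N & restr_dist_ge C J delta].

(* (t,1)_q generalized convertible code with initial codes C i of length n i,
   final code CF of length nF, conversion map phi, unchanged symbols U i
   assigned to final coordinates via f i, and read symbols R i. *)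
Definition gen_convertible (F : fieldType) (t : nat) (n : 'I_t -> nat)
  (C : forall i : 'I_t, {vspace 'rV[F]_(n i)})
  (nF : nat) (CF : {vspace 'rV[F]_nF})
  (phi : (forall i : 'I_t, 'rV[F]_(n i)) -> 'rV[F]_nF)
  (U : forall i : 'I_t, {set 'I_(n i)})
  (f : forall i : 'I_t, 'I_(n i) -> 'I_nF)
  (R : forall i : 'I_t, {set 'I_(n i)}) : Prop :=
  let inC (x : forall i : 'I_t, 'rV[F]_(n i)) := forall i, x i \in C i in
  (* written symbols: final coordinates not assigned to unchanged symbols *)
  let W := [set w : 'I_nF | [forall i : 'I_t, [forall u in U i, f i u != w]]] in
  (
   \dim CF = (\sum_(i < t) \dim (C i))%N /\
   (forall a x y, inC x -> inC y ->
      phi (fun i => a *: x i + y i) = a *: phi x + phi y) /\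
   (forall x, inC x -> phi x \in CF) /\
   (forall x y, inC x -> inC y -> phi x = phi y -> forall i, x i = y i) /\
   (forall z, z \in CF -> exists2 x, inC x & phi x = z) /\
   (forall i (u v : 'I_(n i)), u \in U i -> v \in U i -> f i u = f i v -> u = v)
   /\ (forall i j (u : 'I_(n i)) (v : 'I_(n j)), u \in U i -> v \in U j ->
         i != j -> f i u != f j v) /\
   (forall x, inC x -> forall i u, u \in U i -> phi x ord0 (f i u) = x i ord0 u) /\
   (forall x y, inC x -> inC y ->
      (forall i j, j \in R i -> x i ord0 j = y i ord0 j) ->
      forall w, w \in W -> phi x ord0 w = phi y ord0 w)).

Definition Delta (t : nat) (n : 'I_t -> nat)
  (U R : forall i : 'I_t, {set 'I_(n i)}) (dF : nat) (i : 'I_t) : int :=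
  (#|U i :\: R i|%:Z - dF%:Z + 1)%R.

(* Main.v *)
Require Import Defs.
From HB Require Import structures.
From mathcomp Require Import all_boot all_order all_algebra.
From mathcomp Require Import zify.
From Stdlib Require Import FunctionalExtensionality.
Set Implicit Arguments. Unset Strict Implicit. Unset Printing Implicit Defensive.
Import Order.TTheory GRing.Theory Num.Theory.
Local Open Scope ring_scope.

Section Ar.
Local Open Scope nat_scope.
Lemma ar7_aux p e q s r d : (e < r)%N -> (s < r + d)%N ->
  (p * (r + d) + e + 1 <= q * (r + d) + s)%N ->
  (p * r + e + 1 + d * q <= q * (r + d) + s)%N.
Proof.
move=> he hs h.
case: (leqP q p) => hq.
  have [x ex] : exists x, p = q + x by exists (p - q); lia.
  subst p; move: h; rewrite !mulnDl !mulnDr; lia.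
have [x ex] : exists x, q = p + x.+1 by exists (q - p).-1; lia.
subst q; move: h; rewrite !mulnDl !mulnDr !mulnS !mulSn; lia.
Qed.
Lemma ar7 k a dF r d : (1 <= k)%N -> (1 <= r)%N ->
  (dF + k.-1 + (k.-1 %/ r) * d <= a)%N ->
  (k + d * ((a + 1 - dF) %/ (r + d)) <= a + 1 - dF)%N.
Proof.
move=> hk hr h.
have hN : (0 < r + d)%N by lia.
have he := ltn_pmod k.-1 hr.
have hs := ltn_pmod (a + 1 - dF) hN.
have ek := divn_eq k.-1 r.
have eD := divn_eq (a + 1 - dF) (r + d).
move: he hs h ek eD.
move: (k.-1 %/ r) (k.-1 %% r) ((a + 1 - dF) %/ (r + d)) ((a + 1 - dF) %% (r + d)) => p e q s.
move=> he hs h ek eD.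
have h2 : (p * (r + d) + e + 1 <= q * (r + d) + s)%N.
  rewrite -eD mulnDr; lia.
have := @ar7_aux p e q s r d he hs h2; rewrite -ek addn1 prednK //; lia.
Qed.


End Ar.

Section Vanish.
Variable F : fieldType.
Variable n : nat.

Definition sel (Y : {set 'I_n}) : 'M[F]_(n, #|Y|) :=
  \matrix_(j, k) (j == enum_val k)%:R.

Lemma selE (Y : {set 'I_n}) (c : 'rV[F]_n) k :
  (c *m sel Y) ord0 k = c ord0 (enum_val k).
Proof.
rewrite !mxE (bigD1 (enum_val k)) //= mxE eqxx mulr1 big1 ?addr0 //.
by move=> j /negbTE ne; rewrite mxE ne mulr0.
Qed.

Definition vanish (V : {vspace 'rV[F]_n}) (Y : {set 'I_n}) :=
  (V :&: lker (linfun (mulmxr (sel Y))))%VS.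

Lemma mem_vanish V Y c :
  (c \in vanish V Y) = (c \in V) && [forall y in Y, c ord0 y == 0].
Proof.
rewrite memv_cap memv_ker lfunE /=; congr (_ && _).
apply/eqP/forall_inP => [H y Hy|H].
  have := congr1 (fun m : 'rV_#|Y| => m ord0 (enum_rank_in Hy y)) H.
  by rewrite selE enum_rankK_in // mxE => ->.
by apply/rowP => k; rewrite selE mxE; apply/eqP/H/enum_valP.
Qed.

Lemma dim_vanish V Y : (\dim V <= \dim (vanish V Y) + #|Y|)%N.
Proof.
rewrite -(limg_ker_dim (linfun (mulmxr (sel Y))) V) leq_add2l.
apply: leq_trans (dimvS (subvf _)) _; by rewrite dimvf (@dim_matrix F 1 #|Y|) mul1r.
Qed.

Lemma vanish_sub V Y : (vanish V Y <= V)%VS.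
Proof. exact: capvSl. Qed.
End Vanish.

Lemma exists_subset (T : finType) (A : {set T}) s :
  (s <= #|A|)%N -> exists2 Y : {set T}, Y \subset A & #|Y| = s.
Proof.
move=> hs; exists [set x in take s (enum A)].
  by apply/subsetP => x; rewrite inE => /mem_take; rewrite mem_enum.
rewrite cardsE; move/card_uniqP: (take_uniq s (enum_uniq (mem A))) => ->.
by rewrite size_take -cardE; case: ltngtP hs => // ->.
Qed.


Lemma ar1 y a b r d : y = (a - d.-1)%N -> (b <= r + d - 1)%N -> (a <= b)%N -> (1 <= d)%N -> (y <= r)%N.
Proof. rewrite -?subn1; lia. Qed.
Lemma ar2 k k' y r : (k <= k' + y)%N -> (r < k)%N -> (y <= r)%N -> (0 < k')%N.
Proof. rewrite -?subn1; lia. Qed.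
Lemma ar3 s a y d : (1 <= d)%N -> y = (a - d.-1)%N -> (d <= a)%N -> (s <= a - y)%N -> (d <= s)%N -> False.
Proof. rewrite -?subn1; lia. Qed.
Lemma ar4 s' s a N d : s' = (s - a)%N -> (s <= N.+1)%N -> (d <= a)%N -> (1 <= d)%N -> (s' <= N)%N.
Proof. rewrite -?subn1; lia. Qed.
Lemma ar5 sp s' s a y d k k' p p' : s' = (s - a)%N -> (a <= s)%N -> y = (a - d.-1)%N -> (d <= a)%N ->
  (k <= k' + y)%N -> (0 < k')%N -> (p <= p' + d.-1)%N ->
  (sp + k'.-1 + p' <= s')%N -> (sp + k.-1 + p <= s)%N.
Proof. rewrite -?subn1; lia. Qed.

Lemma ar6 k k' y r : (k <= k' + y)%N -> (y <= r)%N -> (k.-1 <= r + k'.-1)%N.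
Proof. rewrite -?subn1; lia. Qed.

Section Key.
Variables (F : fieldType) (n r delta : nat).
Variables (A : {set 'I_n}) (K0 : {vspace 'rV[F]_n}).
Hypothesis hr : (1 <= r)%N.
Hypothesis hd : (1 <= delta)%N.
Hypothesis hinj : forall c, c \in K0 -> (forall j, j \in A -> c ord0 j = 0) -> c = 0.
Hypothesis hloc : forall u, u \in A -> exists L : {set 'I_n},
  [/\ u \in L, L \subset A, (#|L| <= r + delta - 1)%N &
      forall c, c \in K0 -> supp_in L c != set0 ->
        (delta <= #|supp_in L c|)%N].


Lemma vpick_nz (K : {vspace 'rV[F]_n}) : (0 < \dim K)%N -> vpick K != 0.
Proof. by rewrite lt0n dimv_eq0 vpick0. Qed.

Lemma dimK_le (S : {set 'I_n}) (K : {vspace 'rV[F]_n}) :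
  S \subset A -> (K <= K0)%VS ->
  (forall c, c \in K -> forall j, j \in A -> j \notin S -> c ord0 j = 0) ->
  (\dim K <= #|S|)%N.
Proof.
move=> hSA hK hvan.
have H0 : vanish K S = 0%VS.
  apply/eqP; rewrite -subv0; apply/subvP => c; rewrite mem_vanish memv0.
  case/andP=> cK /forall_inP cS; apply/eqP/hinj; first exact: (subvP hK).
  move=> j jA; case: (boolP (j \in S)) => [/cS/eqP //|jS]; exact: hvan.
by have := dim_vanish K S; rewrite H0 dimv0.
Qed.

Lemma base (S : {set 'I_n}) (K : {vspace 'rV[F]_n}) :
  S \subset A -> (K <= K0)%VS ->
  (forall c, c \in K -> forall j, j \in A -> j \notin S -> c ord0 j = 0) ->
  (0 < \dim K)%N -> (\dim K <= r)%N ->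
  exists2 c, c \in K & c != 0 /\
    (#|supp_in S c| + (\dim K).-1 + ((\dim K).-1 %/ r) * delta.-1 <= #|S|)%N.
Proof.
move=> hSA hK hvan hpos hle.
have hKS := dimK_le hSA hK hvan.
have [Y YS cY] := @exists_subset _ S (\dim K).-1 (leq_trans (leq_pred _) hKS).
have hK' := dim_vanish K Y.
have pos' : (0 < \dim (vanish K Y))%N by lia.
exists (vpick (vanish K Y)).
  exact: (subvP (vanish_sub K Y)) _ (memv_pick _).
split; first exact: vpick_nz.
have := memv_pick (vanish K Y); rewrite mem_vanish => /andP[_ /forall_inP cY0].
have sub : supp_in S (vpick (vanish K Y)) \subset S :\: Y.
  apply/subsetP => x; rewrite !inE => /andP[xS nz]; rewrite xS andbT.
  by apply: contra nz => /cY0.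
have := subset_leq_card sub; rewrite cardsD (setIidPr YS) divn_small; last by lia.
have := subset_leq_card YS; lia.
Qed.

Lemma key N : forall (S : {set 'I_n}) (K : {vspace 'rV[F]_n}),
  (#|S| <= N)%N -> S \subset A -> (K <= K0)%VS ->
  (forall c, c \in K -> forall j, j \in A -> j \notin S -> c ord0 j = 0) ->
  (0 < \dim K)%N ->
  exists2 c, c \in K & c != 0 /\
    (#|supp_in S c| + (\dim K).-1 + ((\dim K).-1 %/ r) * delta.-1 <= #|S|)%N.
Proof.
elim: N => [|N IH] S K hN hSA hK hvan hpos.
  by have := dimK_le hSA hK hvan; lia.
case: (leqP (\dim K) r) => hle; first exact: base.
set c0 := vpick K.
have c0K : c0 \in K := memv_pick K.
have c0K0 : c0 \in K0 := subvP hK _ c0K.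
have [j jA cj] : exists2 j, j \in A & c0 ord0 j != 0.
  case: (boolP [exists j in A, c0 ord0 j != 0]) => [/exists_inP //|].
  rewrite negb_exists_in => /forall_inP H.
  have : c0 = 0 by apply: hinj => // x /H; rewrite negbK => /eqP.
  by move/eqP; rewrite (negbTE (vpick_nz hpos)).
have jS : j \in S.
  by apply: contraTT cj; rewrite negbK => /(hvan _ c0K _ jA) ->.
have [L [jL LA Lcard Ldist]] := hloc jA.
set J := L :&: S.
have JS : J \subset S := subsetIr _ _.
have JL : J \subset L := subsetIl _ _.
have supp0 : supp_in (L) c0 \subset J.
  apply/subsetP => x; rewrite !inE => /andP[xL nz]; rewrite xL /=.
  apply: contraTT nz; rewrite negbK => xS.
  by rewrite (hvan _ c0K _ (subsetP LA _ xL) xS).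
have dJ : (delta <= #|J|)%N.
  apply: leq_trans (subset_leq_card supp0); apply: Ldist => //.
  by apply/set0Pn; exists j; rewrite !inE jL cj.
have [Y YJ cY] := @exists_subset _ J (#|J| - delta.-1) (leq_subr _ _).
have JLc := subset_leq_card JL.
have Yr : (#|Y| <= r)%N := ar1 cY Lcard JLc hd.
set K' := vanish K Y.
have hK' := dim_vanish K Y.
have pos' : (0 < \dim K')%N := ar2 hK' hle Yr.
have K'K : (K' <= K)%VS := vanish_sub K Y.
have vanJ : forall c, c \in K' -> forall x, x \in L -> c ord0 x = 0.
  move=> c cK' x xL.
  have cK : c \in K := subvP K'K _ cK'.
  have := cK'; rewrite mem_vanish => /andP[_ /forall_inP cY0].
  have sub : supp_in (L) c \subset J :\: Y.
    apply/subsetP => y; rewrite !inE => /andP[yL nz]; rewrite yL /=.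
    apply/andP; split; first by apply: contra nz => /cY0.
    apply: contraTT nz; rewrite negbK => yS.
    by rewrite (hvan _ cK _ (subsetP LA _ yL) yS).
  have e : supp_in (L) c = set0.
    apply/eqP; apply: contraTT isT => ne.
    have := Ldist c (subvP hK _ cK) ne.
    have := subset_leq_card sub; rewrite cardsD (setIidPr YJ) => h1 h2; by case: (ar3 hd cY dJ h1 h2).
  by have := in_set0 x; rewrite -e !inE xL /= => /negbFE/eqP.
set S' := S :\: J.
have cS' : #|S'| = (#|S| - #|J|)%N by rewrite /S' cardsD (setIidPr JS).
have JSc := subset_leq_card JS.
have [c cK' [cnz hc]] := IH S' K' (ar4 cS' hN dJ hd)
  (subset_trans (subsetDl _ _) hSA) (subv_trans K'K hK)
  (ltac:(move=> c cK' x xA; rewrite /S' in_setD negb_and negbK;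
         case/orP => [xJ|xS]; [exact: (vanJ _ cK' x (subsetP JL _ xJ))
                              | exact: (hvan _ (subvP K'K _ cK') x xA xS)])) pos'.
exists c; first exact: subvP K'K _ cK'.
split=> //.
have -> : supp_in S c = supp_in S' c.
  apply/setP => x; rewrite !inE; case: (boolP (x \in L)) => xL //=.
  by rewrite (vanJ _ cK' x xL) eqxx !andbF.
have hdiv : ((\dim K).-1 %/ r <= (\dim K').-1 %/ r + 1)%N.
  rewrite addnC -(divnMDl _ _ hr) mul1n.
  apply: leq_div2r; exact: (ar6 hK' Yr).
have hprod : ((\dim K).-1 %/ r * delta.-1 <= (\dim K').-1 %/ r * delta.-1 + delta.-1)%N.
  by rewrite -[X in (_ + X)%N]mul1n -mulnDl leq_mul2r hdiv orbT.
exact: (ar5 cS' JSc cY dJ hK' pos' hprod hc).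
Qed.
End Key.


Definition ins (F : fieldType) (t : nat) (n : 'I_t -> nat) (i : 'I_t)
  (c : 'rV[F]_(n i)) : forall j : 'I_t, 'rV[F]_(n j) :=
  fun j => match i =P j with
           | ReflectT e => ecast j 'rV[F]_(n j) e c
           | ReflectF _ => 0 end.

Lemma insE (F : fieldType) (t : nat) (n : 'I_t -> nat) (i : 'I_t) c :
  @ins F t n i c i = c.
Proof. by rewrite /ins; case: (i =P i) => [e|//]; rewrite (eq_axiomK e). Qed.

Lemma insN (F : fieldType) (t : nat) (n : 'I_t -> nat) (i j : 'I_t) c :
  i != j -> @ins F t n i c j = 0.
Proof. by rewrite /ins; case: (i =P j) => // e /eqP. Qed.

Lemma core (F : finFieldType) (t : nat) (n : 'I_t -> nat)
  (C : forall i : 'I_t, {vspace 'rV[F]_(n i)})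
  (nF : nat) (CF : {vspace 'rV[F]_nF})
  (phi : (forall i : 'I_t, 'rV[F]_(n i)) -> 'rV[F]_nF)
  (U : forall i : 'I_t, {set 'I_(n i)})
  (f : forall i : 'I_t, 'I_(n i) -> 'I_nF)
  (R : forall i : 'I_t, {set 'I_(n i)})
  (r delta dF : nat) :
  gen_convertible C CF phi U f R ->
  has_locality CF r delta ->
  is_min_dist CF dF ->
  forall i : 'I_t, (#|R i| < \dim (C i))%N ->
  exists k', [/\ (\dim (C i) <= k' + #|R i|)%N, (1 <= k')%N &
     (dF + k'.-1 + (k'.-1 %/ r) * delta.-1 <= #|U i :\: R i|)%N].
Proof.
rewrite /gen_convertible /=.
move=> [hdim [hlin [hin [hinjphi [hsurj [hUinj [hUdist [hcopy hread]]]]]]]].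
move=> [hr [hd hlocF]] [_ hmin] i hk.
set A := U i :\: R i.
set K0 := vanish (C i) (R i).
pose z : forall j : 'I_t, 'rV[F]_(n j) := fun j => 0.
have hz : forall j, z j \in C j by move=> j; exact: mem0v.
have phi0 : phi z = 0.
  have h := hlin 1 z z hz hz.
  have e : (fun j => 1 *: z j + z j) = z.
    apply: functional_extensionality_dep => j; by rewrite scale1r addr0.
  rewrite e scale1r in h.
  by apply: (@addrI _ (phi z)); rewrite addr0 -h.
have K0C : forall c, c \in K0 -> c \in C i.
  by move=> c; rewrite mem_vanish => /andP[].
have K0R : forall c, c \in K0 -> forall u, u \in R i -> c ord0 u = 0.
  by move=> c; rewrite mem_vanish => /andP[_ /forall_inP H] u /H/eqP.
have insC : forall c, c \in C i -> forall j, ins c j \in C j.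
  move=> c cC j; case: (eqVneq i j) => [<-|ne]; first by rewrite insE.
  by rewrite insN // mem0v.
have F1 : forall c, c \in K0 -> phi (ins c) \in CF.
  by move=> c /K0C cC; apply: hin; exact: insC.
have F2 : forall c, c \in K0 -> phi (ins c) = 0 -> c = 0.
  move=> c /K0C cC e.
  have := hinjphi _ _ (insC _ cC) hz; rewrite e phi0 => /(_ erefl i).
  by rewrite insE.
have F3 : forall c, c \in K0 -> forall u, u \in U i ->
    phi (ins c) ord0 (f i u) = c ord0 u.
  by move=> c /K0C cC u uU; rewrite hcopy ?insE //; exact: insC.
have F4 : forall c, c \in K0 -> forall w, w \notin f i @: A ->
    phi (ins c) ord0 w = 0.
  move=> c cK w wA.
  have cC := K0C c cK.
  case: (boolP (w \in [set w : 'I_nF | [forall j : 'I_t, [forall u in U j, f j u != w]]])) => wW.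
    rewrite (hread _ z (insC _ cC) hz) ?phi0 ?mxE //.
    move=> j jj jR; case: (eqVneq i j) => [ij|ne].
      subst j; by rewrite insE mxE (K0R c cK).
    by rewrite insN // !mxE.
  move: wW; rewrite inE negb_forall => /existsP [j].
  rewrite negb_forall_in => /exists_inP [u uU /negbNE/eqP ew]; rewrite -ew.
  rewrite hcopy //; last exact: insC.
  case: (eqVneq i j) => [ij|ne]; last by rewrite insN // mxE.
  subst j; rewrite insE.
  case: (boolP (u \in R i)) => uR; first exact: K0R.
  have uA : u \in A by rewrite !inE uR uU.
  by rewrite -ew (imset_f (f i) uA) in wA.
have fA : {in A &, injective (f i)}.
  by move=> u v /setDP[uU _] /setDP[vU _]; apply: hUinj.
have suppE : forall c, c \in K0 -> forall J : {set 'I_nF},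
    supp_in J (phi (ins c)) = f i @: supp_in [set v in A | f i v \in J] c.
  move=> c cK J; apply/setP => w; rewrite inE.
  apply/andP/imsetP => [[wJ nz]|[v]].
    case: (boolP (w \in f i @: A)) => [/imsetP [v vA ew]|wA].
      exists v => //; rewrite !inE -ew wJ andbT -(F3 c cK v (setDP vA).1) -ew nz.
      by move: vA; rewrite inE => ->.
    by rewrite F4 ?eqxx in nz.
  rewrite !inE => /andP[/andP[vA vJ] nz] ->; split=> //.
  by rewrite F3 // (andP vA).2.
have suppC : forall c, c \in K0 -> forall J : {set 'I_nF},
    #|supp_in J (phi (ins c))| = #|supp_in [set v in A | f i v \in J] c|.
  move=> c cK J; rewrite suppE // card_in_imset //.
  move=> u v; rewrite !inE => /andP[/andP[uA _] _] /andP[/andP[vA _] _].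
  by apply: fA; rewrite !inE.
have hinj : forall c, c \in K0 -> (forall j, j \in A -> c ord0 j = 0) -> c = 0.
  move=> c cK H; apply: F2 => //; apply/rowP => w; rewrite mxE.
  case: (boolP (w \in f i @: A)) => [/imsetP [v vA ->]|wA]; last exact: F4.
  by rewrite F3 ?H // (setDP vA).1.
have hloc : forall u, u \in A -> exists L : {set 'I_(n i)},
  [/\ u \in L, L \subset A, (#|L| <= r + delta - 1)%N &
      forall c, c \in K0 -> supp_in L c != set0 ->
        (delta <= #|supp_in L c|)%N].
  move=> u uA; have [J [uJ Jc Jd]] := hlocF (f i u).
  exists [set v in A | f i v \in J]; split.
  - by rewrite in_set uA uJ.
  - by apply/subsetP => v; rewrite inE => /andP[].
  - apply: leq_trans Jc; rewrite -(card_in_imset (f := f i)).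
      apply: subset_leq_card; apply/subsetP => w /imsetP [v]; rewrite inE.
      by move=> /andP[_ vJ] ->.
    by move=> x y /setIdP[xA _] /setIdP[yA _]; apply: fA.
  - move=> c cK ne; rewrite -suppC //; apply: Jd; first exact: F1.
    by rewrite suppE // imset_eq0.
have hdK := dim_vanish (C i) (R i).
have pos : (0 < \dim K0)%N := ar2 hdK hk (leqnn _).
have [c cK [cnz hc]] := key hr (ltnW hd) hinj hloc (leqnn #|A|) (subxx A) (subvv K0)
  (fun c _ j jA jnA => False_ind _ (negP jnA jA)) pos.
exists (\dim K0); split => //.
have : (dF <= #|supp_in A c|)%N.
  have -> : A = [set v in A | f i v \in [set: 'I_nF]].
    by apply/setP => v; rewrite !inE andbT.
  rewrite -suppC //; apply: hmin; first exact: F1.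
  by apply: contra cnz => /eqP/F2 ->.
move=> h; apply: leq_trans _ hc; by rewrite -!addnA leq_add2r.
Qed.


Lemma arA a dF k R k' p : (a%:Z - dF%:Z + 1 <= 0)%R -> (k <= k' + R)%N -> (1 <= k')%N ->
  (dF + k'.-1 + p <= a)%N -> False.
Proof. rewrite -?subn1; lia. Qed.
Lemma arB k R D P k' : (k <= k' + R)%N -> (k' + P <= D)%N ->
  (k%:Z - D%:Z + P%:Z <= R%:Z)%R.
Proof. lia. Qed.
Lemma arC n k dF R k' a p : (n - k + 1 < dF)%N -> (k <= k' + R)%N -> (1 <= k')%N ->
  (dF + k'.-1 + p <= a)%N -> (a + R <= n)%N -> False.
Proof. rewrite -?subn1; lia. Qed.
Lemma arD n k dF R a : (n - k + 1 < dF)%N -> (k <= R)%N -> (a + R <= n)%N ->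
  (a%:Z - dF%:Z + 1 <= 0)%R.
Proof. lia. Qed.
Lemma arE a dF : ~~ (a%:Z - dF%:Z + 1 <= 0)%R ->
  (a%:Z - dF%:Z + 1 = (a + 1 - dF)%N%:Z)%R.
Proof. lia. Qed.
Lemma arG d : (1 <= d)%N -> (d%:Z - 1 = (d.-1)%:Z)%R.
Proof. rewrite -?subn1; lia. Qed.
Lemma arF r d : (1 <= d)%N -> (r + d - 1 = r + d.-1)%N.
Proof. rewrite -?subn1; lia. Qed.

Theorem mainTheorem3 (F : finFieldType) (t : nat) (n : 'I_t -> nat)
  (C : forall i : 'I_t, {vspace 'rV[F]_(n i)})
  (nF : nat) (CF : {vspace 'rV[F]_nF})
  (phi : (forall i : 'I_t, 'rV[F]_(n i)) -> 'rV[F]_nF)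
  (U : forall i : 'I_t, {set 'I_(n i)})
  (f : forall i : 'I_t, 'I_(n i) -> 'I_nF)
  (R : forall i : 'I_t, {set 'I_(n i)})
  (r delta dF : nat) :
  gen_convertible C CF phi U f R ->
  has_locality CF r delta ->
  is_min_dist CF dF ->
  (forall i : 'I_t,
     if (Delta U R dF i <= 0)
     then (\dim (C i) <= #|R i|)%N
     else (\dim (C i))%:Z - Delta U R dF i
            + (delta%:Z - 1) * ((Delta U R dF i) %/ (r + delta - 1)%N%:Z)%Z
          <= (#|R i|)%:Z)
  /\
  (forall i : 'I_t, (n i - \dim (C i) + 1 < dF)%N ->
     Delta U R dF i <= 0 /\ (\dim (C i) <= #|R i|)%N).
Proof.
move=> hG hL hM.
have [hr [hd _]] := hL.
have hd1 : (1 <= delta)%N by apply: ltnW.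
have cardAR : forall i, (#|U i :\: R i| + #|R i| <= n i)%N.
  move=> i; have := cardsC (R i); rewrite card_ord => e; rewrite -[X in (_ <= X)%N]e addnC leq_add2l.
  by apply: subset_leq_card; apply/subsetP => x /setDP[_ xR]; rewrite inE.
split.
  move=> i; rewrite /Delta; case: ifP => hD.
    rewrite leqNgt; apply/negP => hk.
    have [k' [h1 h2 h3]] := core hG hL hM hk.
    exact: (arA hD h1 h2 h3).
  have hD' : ~~ (#|U i :\: R i|%:Z - dF%:Z + 1 <= 0) by rewrite hD.
  rewrite (arE hD') divz_nat (arG hd1) -PoszM arF //.
  set D := (#|U i :\: R i| + 1 - dF)%N.
  case: (leqP (\dim (C i)) #|R i|) => hk.
    apply: (@arB _ _ _ _ 0) => //.
    rewrite add0n mulnC; apply: leq_trans (leq_divM D (r + delta.-1)).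
    by rewrite leq_mul2l leq_addl orbT.
  have [k' [h1 h2 h3]] := core hG hL hM hk.
  apply: (arB h1); rewrite /D; exact: ar7.
move=> i hlt.
have hk : (\dim (C i) <= #|R i|)%N.
  rewrite leqNgt; apply/negP => hk.
  have [k' [h1 h2 h3]] := core hG hL hM hk.
  exact: (arC hlt h1 h2 h3 (cardAR i)).
by split => //; rewrite /Delta; exact: (arD hlt hk (cardAR i)).
Qed.
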